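(* Let $(V,\mathcal{G})$ be an instance of $k$-\textsc{Compatible Ordering} with $\mathcal{G}=\{(A_1,B_1),\dots,(A_k,B_k)\}$. If there exists $i\in[k]$ such that the union of $A_i$ and $B_i$ is a directed acyclic graph, then $(V,\mathcal{G})$ is a yes-instance.
   Context: For a positive integer $k$, write $[k]=\{1,\dots,k\}$. An instance of $k$-\textsc{Compatible Ordering} consists of a finite vertex set $V$ with $n=|V|$ and a collection $\mathcal{G}$ of $k$ pairs of directed graphs $(A_1,B_1),\dots,(A_k,B_k)$ with $V(A_i)=V(B_i)=V$ for all $i\in[k]$. The instance is a yes-instance if and only if there exist an ordering $s_1,\dots,s_n$ of $V$ and labels $\ell_1,\dots,\ell_n\in[k]$ such that for every $i\in[n]$: (i) $s_i$ has no out-neighbor in $A_{\ell_i}$ among $s_{i+1},\dots,s_n$, and (ii) $s_i$ has no in-neighbor in $B_{\ell_i}$ among $s_1,\dots,s_{i-1}$. The union of $A_i$ and $B_i$ is the directed graph on $V$ whose arc set is the union of their arc sets. *)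

(* Defs.v *)
From mathcomp Require Import all_boot.
Set Implicit Arguments. Unset Strict Implicit. Unset Printing Implicit Defensive.

Definition dunion (V : finType) (A B : rel V) : rel V := fun x y => A x y || B x y.

Definition acyclic_digraph (V : finType) (e : rel V) : Prop :=
  forall x y, e x y -> ~~ connect e y x.

(* Yes-instance of k-Compatible Ordering: an ordering s_1..s_n of V
   (s : seq V, duplicate free, covering V) and labels l_1..l_n in [k]
   (here 'I_k, 0-based) such that for every position i:
   (i) s_i has no out-neighbour in A_{l_i} among later vertices,
   (ii) s_i has no in-neighbour in B_{l_i} among earlier vertices. *)
Definition compatible_ordering_yes (V : finType) (k : nat)
    (A B : 'I_k -> rel V) : Prop :=
  exists (s : seq V) (l : seq 'I_k),
    [/\ uniq s, (forall v : V, v \in s), size l = size s &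
     forall (i : nat) (v0 : V) (c0 : 'I_k), i < size s ->
       let si := nth v0 s i in let li := nth c0 l i in
       (forall j, i < j < size s -> ~~ A li si (nth v0 s j)) /\
       (forall j, j < i -> ~~ B li (nth v0 s j) si)].

(* Main.v *)
Require Import Defs.
From mathcomp Require Import all_boot.

Lemma rank_lt (V : finType) (e : rel V) (x y : V) :
  acyclic_digraph e -> e x y ->
  #|[pred z | connect e y z]| < #|[pred z | connect e x z]|.
Proof.
move=> ac exy; apply: proper_card; apply/properP; split.
  apply/subsetP => z; rewrite !inE => yz.
  by apply: connect_trans yz; apply: connect1.
exists x; first by rewrite inE connect0.
by rewrite inE; apply: ac.
Qed.

Theorem corollary1 (V : finType) (k : nat) (A B : 'I_k -> rel V) :
  (exists i : 'I_k, acyclic_digraph (dunion (A i) (B i))) ->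
  compatible_ordering_yes A B.
Proof.
move=> [c ac].
set e := dunion (A c) (B c).
pose f x := #|[pred z | connect e x z]|.
pose r := fun a b => f a <= f b.
have rtot : total r by move=> a b; rewrite /r leq_total.
have rtr : transitive r by move=> a b d; rewrite /r; apply: leq_trans.
set s := sort r (enum V).
have ss : sorted r s := sort_sorted rtot _.
have key : forall v0 a b, a < b < size s -> ~~ e (nth v0 s a) (nth v0 s b).
  move=> v0 a b /andP[ab bs]; apply/negP => E.
  have := @rank_lt V e _ _ ac E; rewrite ltnNge.
  have -> : f (nth v0 s a) <= f (nth v0 s b); last by [].
  apply: (sorted_leq_nth rtr (fun x => leqnn _) v0 ss); rewrite ?inE //.
    exact: ltn_trans ab bs.
  exact: ltnW.
exists s, (nseq (size s) c); split.
- by rewrite sort_uniq enum_uniq.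
- by move=> v; rewrite mem_sort mem_enum.
- by rewrite size_nseq.
move=> i v0 c0 iS /=; rewrite nth_nseq iS; split.
  move=> j ij; have := key v0 i j ij; rewrite /e /dunion.
  by case: (A c _ _).
move=> j ji; have := key v0 j i; rewrite ji iS => /(_ isT).
by rewrite /e /dunion; case: (B c _ _) => /=; rewrite ?orbT.
Qed.
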